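(* Let $\alpha>-1$ and define $c_1^*(\alpha,x)=0$ and, for $i=1,2,3,\ldots$, $$c_{2i}^*(\alpha,x)=\frac{4(-1)^{i+1}}{(2i)!}\binom{\alpha+1}{i-1}\,{}_2F_1\!\left(\begin{matrix}-i+1,\;\alpha+\frac52-i\\ \frac12\end{matrix};x^2\right),$$ $$c_{2i+1}^*(\alpha,x)=\frac{8(-1)^{i+1}}{(2i+1)!}\binom{\alpha}{i-1}(\alpha+1)\,x\,{}_2F_1\!\left(\begin{matrix}-i+1,\;\alpha+\frac52-i\\ \frac32\end{matrix};x^2\right).$$ Then $$\sum_{i=1}^\infty c_i^*(\alpha,-1)=2\,{}_1F_1\!\left(\begin{matrix}-\alpha-1\\ 3\end{matrix};2\right),\qquad \sum_{i=1}^\infty c_i^*(\alpha,1)=2\,{}_1F_1\!\left(\begin{matrix}-\alpha-1\\ 3\end{matrix};-2\right).$$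
   Context: $(a)_k$ is the Pochhammer symbol, $\binom{\gamma}{m}$ the generalized binomial coefficient, ${}_2F_1$ and ${}_1F_1$ the standard hypergeometric series $\sum_k\frac{(a)_k(b)_k}{(c)_k}\frac{z^k}{k!}$ and $\sum_k\frac{(a)_k}{(b)_k}\frac{z^k}{k!}$; the ${}_2F_1$'s above terminate. *)

(* Defs.v *)
From Stdlib Require Import Reals Arith.
From Coquelicot Require Import Coquelicot.
Open Scope R_scope.

Fixpoint poch (a : R) (k : nat) : R :=
  match k with
  | O => 1
  | S k' => poch a k' * (a + INR k')
  end.

Fixpoint falling (g : R) (m : nat) : R :=
  match m with
  | O => 1
  | S m' => falling g m' * (g - INR m')
  end.

Definition gbinom (g : R) (m : nat) : R := falling g m / INR (fact m).

Definition hyp2F1 (a b c z : R) : R :=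
  Series (fun k => poch a k * poch b k / poch c k * z ^ k / INR (fact k)).

Definition hyp1F1 (a b z : R) : R :=
  Series (fun k => poch a k / poch b k * z ^ k / INR (fact k)).

(* c_n^*(alpha, x) for n >= 1 (value at n = 0 is irrelevant, set to 0). *)
Definition cstar (alpha x : R) (n : nat) : R :=
  match n with
  | O => 0
  | 1%nat => 0
  | _ =>
    let i := Nat.div2 n in
    if Nat.even n then
      4 * (-1) ^ (i + 1) / INR (fact (2 * i)) * gbinom (alpha + 1) (i - 1)
        * hyp2F1 (- INR i + 1) (alpha + 5 / 2 - INR i) (1 / 2) (x ^ 2)
    else
      8 * (-1) ^ (i + 1) / INR (fact (2 * i + 1)) * gbinom alpha (i - 1)
        * (alpha + 1) * x
        * hyp2F1 (- INR i + 1) (alpha + 5 / 2 - INR i) (3 / 2) (x ^ 2)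
  end.

(* Main.v *)
Require Import Defs.
From Stdlib Require Import Reals Arith Lra Lia.
From Coquelicot Require Import Coquelicot.
Open Scope R_scope.

Lemma poch_add a m n : poch a (m+n) = poch a m * poch (a + INR m) n.
Proof. induction n; simpl. rewrite Nat.add_0_r; ring.
rewrite Nat.add_succ_r; simpl; rewrite IHn, plus_INR; ring. Qed.

Lemma falling_poch x m : falling x m = (-1)^m * poch (-x) m.
Proof. induction m; simpl. ring. rewrite IHm; ring. Qed.

Lemma poch_shift b k : poch b (S k) = b * poch (b+1) k.
Proof. induction k. simpl; ring.
change (poch b (S (S k))) with (poch b (S k) * (b + INR (S k))).
rewrite IHk; simpl poch; rewrite S_INR; ring. Qed.

Lemma falling_pascal x k : falling (x+1) (S k) = falling x (S k) + INR (S k) * falling x k.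
Proof. induction k. simpl; ring.
change (falling (x+1) (S (S k))) with (falling (x+1) (S k) * (x + 1 - INR (S k))).
rewrite IHk.
change (falling x (S (S k))) with (falling x (S k) * (x - INR (S k))).
change (falling x (S k)) with (falling x k * (x - INR k)).
rewrite !S_INR. ring. Qed.

Lemma falling_nat_zero n k : (n < k)%nat -> falling (INR n) k = 0.
Proof. induction k; intro H. lia. simpl.
destruct (Nat.eq_dec n k) as [->|]. ring. rewrite IHk by lia; ring. Qed.

Lemma poch_pos c k : 0 < c -> 0 < poch c k.
Proof. intro; induction k; simpl. lra. apply Rmult_lt_0_compat; auto. pose proof (pos_INR k); lra. Qed.

Definition Gt x b c k := (-1)^k * falling x k / INR (fact k) * (poch b k / poch c k).
Definition G x b c N := sum_f_R0 (Gt x b c) N.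

Lemma G0 b c N : G 0 b c N = 1.
Proof. induction N. unfold G, Gt; simpl; field.
unfold G in *.
change (sum_f_R0 (Gt 0 b c) (S N)) with (sum_f_R0 (Gt 0 b c) N + Gt 0 b c (S N)).
rewrite IHN. unfold Gt.
change (falling 0 (S N)) with (falling (INR 0) (S N)); rewrite (falling_nat_zero 0 (S N)) by lia. unfold Rdiv; ring. Qed.

Lemma Gstep x b c N : 0 < c -> G (x+1) b c (S N) = G x b c (S N) - b/c * G x (b+1) (c+1) N.
Proof. intro Hc. unfold G.
rewrite (decomp_sum (Gt (x+1) b c)), (decomp_sum (Gt x b c)) by lia. simpl pred.
replace (Gt (x+1) b c 0) with (Gt x b c 0) by (unfold Gt; simpl; field).
rewrite scal_sum.
assert (sum_f_R0 (fun i => Gt (x+1) b c (S i)) N = sum_f_R0 (fun i => Gt x b c (S i) - Gt x (b+1) (c+1) i * (b/c)) N) as ->.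
2:{ rewrite minus_sum; ring. }
apply sum_eq; intros i _.
unfold Gt. rewrite falling_pascal, !(poch_shift _ i).
change (fact (S i)) with (S i * fact i)%nat. rewrite mult_INR.
change ((-1)^(S i)) with (-1 * (-1)^i).
pose proof (poch_pos (c+1) i ltac:(lra)). pose proof (INR_fact_neq_0 i).
pose proof (pos_INR i). rewrite S_INR. field. repeat split; lra. Qed.

Lemma CV n : forall b c N, 0 < c -> (n <= N)%nat -> G (INR n) b c N = poch (c-b) n / poch c n.
Proof. induction n; intros b c N Hc HN.
- simpl INR. rewrite G0. simpl. field.
- destruct N as [|N']; [lia|]. rewrite S_INR, Gstep by lra.
  rewrite IHn by (lia || lra). rewrite (IHn (b+1) (c+1) N') by (lia || lra).
  replace (c+1-(b+1)) with (c-b) by ring.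
  pose proof (poch_pos (c+1) n ltac:(lra)). pose proof (pos_INR n).
  assert (E: poch c n = c * poch (c+1) n / (c + INR n)).
  { rewrite <- poch_shift. simpl. field. lra. }
  change (poch (c-b) (S n)) with (poch (c-b) n * (c - b + INR n)).
  change (poch c (S n)) with (poch c n * (c + INR n)).
  rewrite E. field. repeat split; lra. Qed.

Lemma sum_stable (a : nat -> R) n : (forall k, (n<k)%nat -> a k = 0) ->
  forall m, (n <= m)%nat -> sum_f_R0 a m = sum_f_R0 a n.
Proof. intros H m Hm. induction m.
- replace n with 0%nat by lia. reflexivity.
- destruct (Nat.eq_dec n (S m)) as [<-|]. reflexivity.
  simpl. rewrite IHm by lia. rewrite H by lia. ring. Qed.

Lemma series_finite (a : nat -> R) n : (forall k, (n<k)%nat -> a k = 0) -> is_series a (sum_f_R0 a n).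
Proof. intro H. apply is_series_Reals. intros eps Heps. exists n. intros m Hm.
rewrite (sum_stable a n H m) by lia. unfold R_dist. rewrite Rminus_diag, Rabs_R0. lra. Qed.

Lemma poch_neg x k : poch (-x) k = (-1)^k * falling x k.
Proof. rewrite falling_poch, <- Rmult_assoc, <- Rpow_mult_distr.
replace (-1 * -1) with 1 by ring. rewrite pow1. ring. Qed.

Lemma hyp_at1 m b c : 0 < c -> hyp2F1 (- INR (S m) + 1) b c 1 = poch (c-b) m / poch c m.
Proof. intro Hc. unfold hyp2F1. rewrite <- (CV m b c m) by (lia || lra).
apply is_series_unique. apply (is_series_ext (Gt (INR m) b c)); [|apply (series_finite _ m)].
- intro k. unfold Gt. replace (- INR (S m) + 1) with (- INR m) by (rewrite S_INR; ring).
  rewrite poch_neg, pow1. match goal with |- ?x = ?y => change (@eq R x y) end. pose proof (INR_fact_neq_0 k); pose proof (poch_pos c k Hc); field; split; lra.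
- intros k Hk. unfold Gt. rewrite falling_nat_zero by lia. unfold Rdiv; ring. Qed.

Lemma fact_half m : INR (fact m) * poch (1/2) m * 4^m = INR (fact (2*m)).
Proof. induction m. simpl; ring.
replace (2 * S m)%nat with (S (S (2*m))) by lia.
change (fact (S (S (2*m)))) with (S (S (2*m)) * (S (2*m) * fact (2*m)))%nat.
change (fact (S m)) with (S m * fact m)%nat. rewrite !mult_INR, <- IHm.
change (poch (1/2) (S m)) with (poch (1/2) m * (1/2 + INR m)).
change (4^(S m)) with (4 * 4^m). rewrite !S_INR, mult_INR. simpl INR. field. Qed.

Lemma fact_3half m : INR (fact m) * poch (3/2) m * 4^m = INR (fact (2*m+1)).
Proof. induction m. simpl; field.
replace (2 * S m + 1)%nat with (S (S (2*m+1))) by lia.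
change (fact (S (S (2*m+1)))) with (S (S (2*m+1)) * (S (2*m+1) * fact (2*m+1)))%nat.
change (fact (S m)) with (S m * fact m)%nat. rewrite !mult_INR, <- IHm.
change (poch (3/2) (S m)) with (poch (3/2) m * (3/2 + INR m)).
change (4^(S m)) with (4 * 4^m). rewrite !S_INR, plus_INR, mult_INR. simpl INR. field. Qed.

Lemma poch3 k : poch 3 k * 2 = INR (fact (k+2)).
Proof. induction k. simpl; ring.
change (fact (S k + 2)) with (S (k+2) * fact (k+2))%nat. rewrite mult_INR, <- IHk.
change (poch 3 (S k)) with (poch 3 k * (3 + INR k)).
rewrite S_INR, plus_INR. simpl INR. ring. Qed.

Lemma term_even alpha x m : x^2 = 1 -> cstar alpha x (S (S (2*m))) =
  2 * (poch (-alpha-1) (2*m) / poch 3 (2*m) * (-2*x)^(2*m) / INR (fact (2*m))).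
Proof. intro Hx. unfold cstar.
assert (E: Nat.div2 (S (S (2*m))) = S m) by exact (f_equal S (Nat.div2_double m)). rewrite E.
assert (E2: Nat.even (S (S (2*m))) = true) by exact (Nat.even_mul 2 m). rewrite E2.
rewrite Hx, hyp_at1 by lra.
replace (1/2 - (alpha + 5/2 - INR (S m))) with (-alpha-1 + INR m) by (rewrite S_INR; field).
replace (S m - 1)%nat with m by lia. unfold gbinom. rewrite falling_poch.
replace (-(alpha+1)) with (-alpha-1) by ring.
replace (poch (-alpha-1) (2*m)) with (poch (-alpha-1) m * poch (-alpha-1+INR m) m)
  by (rewrite <- poch_add; f_equal; lia).
replace (2 * S m)%nat with (2*m+2)%nat by lia. rewrite <- (poch3 (2*m)).
rewrite pow_mult. replace ((-2*x)^2) with (4*x^2) by ring. rewrite Hx, Rmult_1_r.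
replace ((-1)^(S m + 1)) with ((-1)^m) by (replace (S m+1)%nat with (2+m)%nat by lia; rewrite pow_add; simpl; ring).
rewrite <- (fact_half m).
assert (Hs: (-1)^m*(-1)^m = 1) by (rewrite <- Rpow_mult_distr; replace (-1 * -1) with 1 by ring; apply pow1).
pose proof (poch_pos (1/2) m ltac:(lra)). pose proof (poch_pos 3 (2*m) ltac:(lra)).
pose proof (INR_fact_neq_0 m). pose proof (pow_lt 4 m ltac:(lra)).
match goal with |- _ = ?r => transitivity ((-1)^m*(-1)^m * r); [|rewrite Hs; ring] end.
field. repeat split; lra. Qed.

Lemma term_odd alpha x m : x^2 = 1 -> cstar alpha x (S (S (2*m+1))) =
  2 * (poch (-alpha-1) (2*m+1) / poch 3 (2*m+1) * (-2*x)^(2*m+1) / INR (fact (2*m+1))).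
Proof. intro Hx. unfold cstar.
assert (E: Nat.div2 (S (S (2*m+1))) = S m) by (rewrite Nat.add_1_r; exact (f_equal S (Nat.div2_succ_double m))). rewrite E.
assert (E2: Nat.even (S (S (2*m+1))) = false).
{ rewrite Nat.add_1_r. change (Nat.even (S (2*m)) = false). rewrite Nat.even_succ, Nat.odd_mul. reflexivity. }
rewrite E2.
rewrite Hx, hyp_at1 by lra.
replace (3/2 - (alpha + 5/2 - INR (S m))) with (-alpha + INR m) by (rewrite S_INR; field).
replace (S m - 1)%nat with m by lia. unfold gbinom. rewrite falling_poch.
replace (poch (-alpha-1) (2*m+1)) with ((-alpha-1) * (poch (-alpha) m * poch (-alpha+INR m) m)).
2:{ replace (2*m+1)%nat with (1+(m+m))%nat by lia. rewrite !poch_add. simpl INR. simpl poch.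
    replace (-alpha-1+1) with (-alpha) by ring. ring. }
replace (2 * S m + 1)%nat with ((2*m+1)+2)%nat by lia. rewrite <- (poch3 (2*m+1)).
replace ((-1)^(S m + 1)) with ((-1)^m) by (replace (S m+1)%nat with (2+m)%nat by lia; rewrite pow_add; simpl; ring).
rewrite <- (fact_3half m).
rewrite pow_add, pow_mult. replace ((-2*x)^2) with (4*x^2) by ring. rewrite Hx, Rmult_1_r, pow_1.

assert (Hs: (-1)^m*(-1)^m = 1) by (rewrite <- Rpow_mult_distr; replace (-1 * -1) with 1 by ring; apply pow1).
pose proof (poch_pos (3/2) m ltac:(lra)). pose proof (poch_pos 3 (2*m+1) ltac:(lra)).
pose proof (INR_fact_neq_0 m). pose proof (pow_lt 4 m ltac:(lra)).
match goal with |- _ = ?r => transitivity ((-1)^m*(-1)^m * r); [|rewrite Hs; ring] end.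
field. repeat split; lra. Qed.

Lemma poch_bound a k : Rabs (poch a k) <= (Rabs a + 1)^k * poch 3 k.
Proof. induction k. simpl. rewrite Rabs_R1. lra.
change (poch a (S k)) with (poch a k * (a + INR k)).
change (poch 3 (S k)) with (poch 3 k * (3 + INR k)).
change ((Rabs a + 1)^(S k)) with ((Rabs a + 1) * (Rabs a + 1)^k).
rewrite Rabs_mult. pose proof (pos_INR k). pose proof (Rabs_pos a).
assert (Rabs (a + INR k) <= (Rabs a + 1) * (3 + INR k)).
{ pose proof (Rabs_triang a (INR k)). rewrite (Rabs_pos_eq (INR k)) in H1 by lra. nra. }
replace ((Rabs a + 1) * (Rabs a + 1) ^ k * (poch 3 k * (3 + INR k))) with
 (((Rabs a + 1) ^ k * poch 3 k) * ((Rabs a + 1) * (3 + INR k))) by ring.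
apply Rmult_le_compat; auto using Rabs_pos. Qed.

Definition t a z k := poch a k / poch 3 k * z^k / INR (fact k).

Lemma ex_exp y : ex_series (fun k => y^k / INR (fact k)).
Proof. exists (exp y). pose proof (is_exp_Reals y) as H. unfold is_pseries in H.
eapply is_series_ext; [|exact H]. intro k. simpl. rewrite pow_n_pow. reflexivity. Qed.

Lemma ex_t a z : ex_series (t a z).
Proof. apply (@ex_series_le R_AbsRing R_CompleteNormedModule _ (fun k => ((Rabs a + 1) * Rabs z)^k / INR (fact k))); [|apply ex_exp].
intro k. change (norm (t a z k)) with (Rabs (t a z k)). unfold t.
pose proof (poch_pos 3 k ltac:(lra)). pose proof (INR_fact_lt_0 k).
unfold Rdiv. rewrite !Rabs_mult, !Rabs_inv, <- RPow_abs, (Rabs_pos_eq (poch 3 k)), (Rabs_pos_eq (INR (fact k))) by lra.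
rewrite Rpow_mult_distr. apply Rmult_le_compat_r. left; apply Rinv_0_lt_compat; lra.
apply Rmult_le_compat_r. apply pow_le, Rabs_pos.
replace ((Rabs a + 1)^k) with ((Rabs a + 1)^k * poch 3 k * / poch 3 k) by (field; lra).
apply Rmult_le_compat_r. left; apply Rinv_0_lt_compat; lra. apply poch_bound. Qed.

Lemma main_gen alpha x z : x^2 = 1 -> z = -2*x ->
  is_series (fun n => cstar alpha x (S n)) (2 * hyp1F1 (-alpha-1) 3 z).
Proof. intros Hx Hz. apply is_series_decr_1.
match goal with |- is_series _ ?l => assert (E: l = scal 2 (Series (t (-alpha-1) z))); [|rewrite E] end.
{ change (cstar alpha x 1) with 0. unfold hyp1F1, t. unfold plus, opp, scal; simpl. unfold mult; simpl. ring. }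
apply (is_series_ext (fun n => scal 2 (t (-alpha-1) z n))).
- intro k. destruct (Nat.Even_or_Odd k) as [[m ->]|[m ->]].
  + rewrite term_even by exact Hx. subst z. reflexivity.
  + rewrite term_odd by exact Hx. subst z. reflexivity.
- apply (@is_series_scal R_AbsRing R_NormedModule). apply Series_correct, ex_t. Qed.

Theorem mainTheorem6 (alpha : R) (Halpha : -1 < alpha) :
  is_series (fun n => cstar alpha (-1) (S n)) (2 * hyp1F1 (- alpha - 1) 3 2) /\
  is_series (fun n => cstar alpha 1 (S n)) (2 * hyp1F1 (- alpha - 1) 3 (-2)).
Proof. split; apply main_gen; ring. Qed.
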